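(* Let $\mathbb{K}$ be a field, $n>1$, and let $a=[a_1,\dots,a_n]\in\mathbb{K}[s]^n$ be a non-zero row vector of degree $d=\max_i\deg(a_i)$. Let $h_1,\dots,h_l$ be a basis of the $\mathbb{K}$-vector space $\mathrm{syz}_d(a)$. Then $\mathrm{syz}(a)=\langle h_1,\dots,h_l\rangle_{\mathbb{K}[s]}$.
   Context: $\mathrm{syz}(a)=\{h\in\mathbb{K}[s]^n \mid a\,h=a_1h_1+\dots+a_nh_n=0\}$ (elements $h$ are column vectors), a $\mathbb{K}[s]$-module. The degree of a polynomial vector is the maximum of the degrees of its entries. $\mathrm{syz}_d(a)=\{h\in\mathbb{K}[s]^n \mid \deg(h)\le d,\ a\,h=0\}$, a finite-dimensional $\mathbb{K}$-vector space. $\langle\cdot\rangle_{\mathbb{K}[s]}$ denotes the $\mathbb{K}[s]$-module generated. *)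

(* Defs.v *)
From mathcomp Require Import all_boot all_order all_algebra.
Set Implicit Arguments. Unset Strict Implicit. Unset Printing Implicit Defensive.
Import GRing.Theory.
Local Open Scope ring_scope.

(* degree of a polynomial row/column vector, encoded via size = degree + 1:
   vsize v = max_i size (v_i); so deg v <= d  <->  vsize v <= d.+1 *)
Definition rvsize (K : fieldType) (n : nat) (a : 'rV[{poly K}]_n) : nat :=
  \max_(i < n) size (a ord0 i).
Definition cvsize (K : fieldType) (n : nat) (h : 'cV[{poly K}]_n) : nat :=
  \max_(i < n) size (h i ord0).

Definition rvdeg (K : fieldType) (n : nat) (a : 'rV[{poly K}]_n) : nat :=
  (rvsize a).-1.

Definition in_syz (K : fieldType) (n : nat) (a : 'rV[{poly K}]_n)
  (h : 'cV[{poly K}]_n) : Prop := a *m h = 0.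

Definition in_syz_d (K : fieldType) (n : nat) (a : 'rV[{poly K}]_n) (d : nat)
  (h : 'cV[{poly K}]_n) : Prop := (cvsize h <= d.+1)%N /\ a *m h = 0.

Definition is_K_basis_syz_d (K : fieldType) (n : nat) (a : 'rV[{poly K}]_n)
  (d : nat) (l : nat) (hs : 'I_l -> 'cV[{poly K}]_n) : Prop :=
  [/\ forall j, in_syz_d a d (hs j),
      (forall c : 'I_l -> K, \sum_(j < l) (c j)%:P *: hs j = 0 -> forall j, c j = 0) &
      (forall h, in_syz_d a d h ->
         exists c : 'I_l -> K, h = \sum_(j < l) (c j)%:P *: hs j)].

Definition in_Kmod_span (K : fieldType) (n : nat) (l : nat)
  (hs : 'I_l -> 'cV[{poly K}]_n) (h : 'cV[{poly K}]_n) : Prop :=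
  exists q : 'I_l -> {poly K}, h = \sum_(j < l) q j *: hs j.

(* Main.v *)
Require Import Defs.
From mathcomp Require Import all_boot all_order all_algebra.
From mathcomp Require Import ring.
Import GRing.Theory.
Local Open Scope ring_scope.

Lemma gcd_comb (K : fieldType) n (f : 'I_n -> {poly K}) : (exists i, f i != 0) ->
  exists u : 'I_n -> {poly K}, (\sum_k u k * f k != 0) /\
     forall i, (\sum_k u k * f k) %| f i.
Proof.
suff H : forall (m : nat) (u : 'I_n -> {poly K}), (size (\sum_k u k * f k)%R <= m)%N ->
   \sum_k u k * f k != 0 -> exists u : 'I_n -> {poly K}, (\sum_k u k * f k != 0) /\
     forall i, (\sum_k u k * f k) %| f i.
  case=> i0 Hi0.
  have E : \sum_k (k == i0)%:R * f k = f i0.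
    rewrite (bigD1 i0) //= eqxx mul1r big1 ?addr0 // => k /negbTE ->.
    by rewrite mul0r.
  by apply: (H _ (fun k => (k == i0)%:R)); rewrite E.
elim=> [|m IH] u.
  by rewrite leqn0 size_poly_eq0 => /eqP ->; rewrite eqxx.
move=> Hs Hne. set g := \sum_k u k * f k in Hs Hne *.
case: (boolP [forall i, g %| f i]) => [/forallP Hall|/forallPn [i Hi]].
  by exists u.
have E : \sum_k ((k == i)%:R - (f i %/ g) * u k) * f k = f i %% g.
    have -> : f i %% g = f i - f i %/ g * g.
      by rewrite {2}(divp_eq (f i) g) addrC addKr.
    under eq_bigr => k _ do rewrite mulrBl -mulrA.
    rewrite sumrB -mulr_sumr -/g (bigD1 i) //= eqxx mul1r big1 ?addr0 //.
    by move=> k /negbTE ->; rewrite mul0r.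
apply: (IH (fun k => (k == i)%:R - (f i %/ g) * u k)); rewrite E.
  by rewrite -ltnS (leq_trans _ Hs) // ltn_modp.
by apply/eqP => /modp_eq0P; apply/negP.
Qed.

Section Span.
Variables (K : fieldType) (n l : nat) (hs : 'I_l -> 'cV[{poly K}]_n).

Lemma span0 : in_Kmod_span hs 0.
Proof. by exists (fun _ => 0); rewrite big1 // => j _; rewrite scale0r. Qed.

Lemma spanD x y : in_Kmod_span hs x -> in_Kmod_span hs y -> in_Kmod_span hs (x + y).
Proof.
move=> [q1 ->] [q2 ->]; exists (fun j => q1 j + q2 j).
by rewrite -big_split; apply: eq_bigr => j _; rewrite scalerDl.
Qed.

Lemma spanZ p x : in_Kmod_span hs x -> in_Kmod_span hs (p *: x).
Proof.
move=> [q ->]; exists (fun j => p * q j).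
by rewrite scaler_sumr; apply: eq_bigr => j _; rewrite scalerA.
Qed.

Lemma span_sum (I : Type) (r : seq I) (P : pred I) (F : I -> 'cV[{poly K}]_n) :
  (forall i, P i -> in_Kmod_span hs (F i)) ->
  in_Kmod_span hs (\sum_(i <- r | P i) F i).
Proof.
move=> H; apply: (big_ind (in_Kmod_span hs)) => //.
  exact: span0.
exact: spanD.
Qed.
End Span.

Theorem lemma2 (K : fieldType) (n : nat) (a : 'rV[{poly K}]_n)
  (l : nat) (hs : 'I_l -> 'cV[{poly K}]_n) :
  (1 < n)%N -> a != 0 ->
  is_K_basis_syz_d a (rvdeg a) hs ->
  forall h : 'cV[{poly K}]_n, in_syz a h <-> in_Kmod_span hs h.
Proof.
move=> _ Ha [Hsyz _ Hspan] h; split; last first.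
  move=> [q ->]; rewrite /in_syz mulmx_sumr big1 // => j _.
  by rewrite -scalemxAr; case: (Hsyz j) => _ ->; rewrite scaler0.
move=> Hh.
pose f (i : 'I_n) : {poly K} := a ord0 i.
have [i0 Hi0] : exists i, f i != 0.
  case: (boolP [exists i, f i != 0]) => [/existsP//|/existsPn Hn].
  case/negP: Ha; apply/eqP/matrixP => x y; rewrite (ord1 x) mxE.
  by move: (Hn y); rewrite negbK => /eqP.
have [u [Hg Hd]] := @gcd_comb K n f (ex_intro _ i0 Hi0).
set g := \sum_k u k * f k in Hg Hd.
pose b i := f i %/ g.
have Hfb i : f i = b i * g by rewrite /b divpK.
have Hub : \sum_k u k * b k = 1.
  apply: (mulIf Hg); rewrite mul1r mulr_suml {2}/g; apply: eq_bigr => k _.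
  by rewrite -mulrA -Hfb.
have Hsz : rvsize a = (rvdeg a).+1.
  rewrite /rvdeg prednK // /rvsize.
  apply: (@leq_trans (size (a ord0 i0))); last by rewrite (bigD1 i0) //= leq_maxl.
  by rewrite lt0n size_poly_eq0.
have Hbs i : (size (b i) <= (rvdeg a).+1)%N.
  by rewrite -Hsz (leq_trans (leq_divp _ _)) // /rvsize (bigD1 i) //= leq_maxl.
pose Kz (j i : 'I_n) : 'cV[{poly K}]_n :=
  \col_k ((if k == j then b i else 0) - (if k == i then b j else 0)).
have HK j i : in_Kmod_span hs (Kz j i).
  have [|c ->] := Hspan (Kz j i); last by exists (fun t => (c t)%:P).
  split.
    apply/bigmax_leqP => k _; rewrite mxE.
    apply: leq_trans (size_polyD _ _) _; rewrite size_polyN geq_max.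
    by apply/andP; split; case: ifP; rewrite ?size_poly0.
  apply/matrixP => x y; rewrite !mxE (ord1 x) (ord1 y).
  under eq_bigr => k _ do rewrite mxE mulrBr.
  rewrite sumrB (bigD1 j) //= eqxx big1 ?addr0; last first.
    by move=> k /negbTE ->; rewrite mulr0.
  rewrite (bigD1 i) //= eqxx big1 ?addr0; last first.
    by move=> k /negbTE ->; rewrite mulr0.
  rewrite -/(f j) -/(f i) (Hfb i) (Hfb j); ring.
have Hbh : \sum_k b k * h k 0 = 0.
  apply: (mulIf Hg); rewrite mul0r mulr_suml.
  transitivity ((a *m h) ord0 ord0); last by rewrite Hh mxE.
  by rewrite mxE; apply: eq_bigr => k _; rewrite mulrAC -Hfb.
have -> : h = \sum_i \sum_j (u i * h j 0) *: Kz j i.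
  apply/matrixP => k y; rewrite (ord1 y).
  transitivity (\sum_i \sum_j u i * h j 0 *
       ((if k == j then b i else 0) - (if k == i then b j else 0))); last first.
    rewrite summxE; apply: eq_bigr => i _; rewrite summxE.
    by apply: eq_bigr => j _; rewrite !mxE.
  transitivity (\sum_i (u i * b i * h k 0 - 0)); last first.
    apply: eq_bigr => i _; under eq_bigr => j _ do rewrite mulrBr.
    rewrite sumrB (bigD1 k) //= eqxx big1 ?addr0; last first.
      by move=> j; rewrite eq_sym => /negbTE ->; rewrite mulr0.
    congr (_ - _); first by ring.
    case: eqP => _; last by rewrite big1 // => j _; rewrite mulr0.
    transitivity (u i * \sum_j b j * h j 0); first by rewrite Hbh mulr0.
    rewrite mulr_sumr; apply: eq_bigr => j _; ring.
  under eq_bigr => i _ do rewrite subr0.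
  by rewrite -mulr_suml Hub mul1r.
apply: span_sum => i _; apply: span_sum => j _; exact: spanZ.
Qed.
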